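(* There is no binary self-orthogonal $[94,7,46]$ code.
   Context: A binary linear code $C$ is self-orthogonal if $C\subseteq C^\perp$. *)

(* Defs.v *)
From HB Require Import structures.
From mathcomp Require Import all_boot all_order all_algebra.
Set Implicit Arguments. Unset Strict Implicit. Unset Printing Implicit Defensive.
Import GRing.Theory.
Local Open Scope ring_scope.

Definition bin_code (n : nat) := {vspace 'rV['F_2]_n}.

Definition wt (n : nat) (x : 'rV['F_2]_n) : nat := #|[set i | x 0 i != 0]|.

Definition dotF2 (n : nat) (x y : 'rV['F_2]_n) : 'F_2 := \sum_(i < n) x 0 i * y 0 i.

Definition self_orthogonal (n : nat) (C : bin_code n) : Prop :=
  forall x y, x \in C -> y \in C -> dotF2 x y = 0.

(* Minimum distance of a linear code = minimum weight of a nonzero codeword. *)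
Definition min_dist (n : nat) (C : bin_code n) (d : nat) : Prop :=
  (exists2 x, x \in C & (x != 0) && (wt x == d)) /\
  (forall x, x \in C -> x != 0 -> (d <= wt x)%N).

Definition is_nkd_code (n k d : nat) (C : bin_code n) : Prop :=
  \dim C = k /\ min_dist C d.

(* Main.v *)
Require Import Defs.
From mathcomp Require Import all_boot all_order all_algebra.
From mathcomp Require Import all_field zify.
Set Implicit Arguments. Unset Strict Implicit.
Import GRing.Theory.
Local Open Scope ring_scope.

(* Proof idea: the codewords of weight divisible by 4 form a subgroup D with
   |D| >= 64 (self-orthogonality makes wt/2 mod 2 additive); its nonzero words
   have weight >= 48, contradicting the Plotkin average-weight bound. *)

Lemma F2cases (a : 'F_2) : a = 0%R \/ a = 1%R.
Proof. by case: a => [[|[|//]] ?]; [left|right]; apply/val_inj. Qed.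

Lemma card_setE (T : finType) (P : pred T) : #|[set i | P i]| = (\sum_i (P i : nat))%N.
Proof. rewrite -sum1_card big_mkcond /=; apply: eq_bigr => i _; rewrite inE; by case: (P i). Qed.

Lemma sum_in_card (T : finType) (A : {set T}) (P : pred T) :
  (\sum_(x in A) (P x : nat) = #|[set x in A | P x]|)%N.
Proof. rewrite card_setE big_mkcond; apply: eq_bigr => x _; by case: (x \in A). Qed.

Definition ov n (x y : 'rV['F_2]_n) := #|[set i | (x 0 i != 0%R) && (y 0 i != 0%R)]|.

Lemma wtD n (x y : 'rV['F_2]_n) : (wt (x + y) + 2 * ov x y = wt x + wt y)%N.
Proof.
rewrite /wt /ov !card_setE big_distrr -!big_split /=; apply: eq_bigr => i _.
rewrite mxE; case: (F2cases (x 0 i)) => ->; case: (F2cases (y 0 i)) => ->; by [].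
Qed.

Lemma dot_ov n (x y : 'rV['F_2]_n) : dotF2 x y = (ov x y)%:R%R.
Proof.
rewrite /dotF2 /ov card_setE natr_sum; apply: eq_bigr => i _.
case: (F2cases (x 0 i)) => ->; case: (F2cases (y 0 i)) => ->; by rewrite ?mulr0 ?mul0r ?mulr1 ?eqxx ?oner_eq0.
Qed.

Lemma ov_even n (C : bin_code n) x y : self_orthogonal C -> x \in C -> y \in C ->
  (2 %| ov x y)%N.
Proof.
move=> so xC yC; have := so x y xC yC; rewrite dot_ov => /eqP.
by rewrite -(dvdn_pcharf (pchar_Fp (p := 2) isT)).
Qed.

Lemma wt0 n : wt (0 : 'rV['F_2]_n) = 0%N.
Proof.
rewrite /wt; apply/eqP; rewrite cards_eq0; apply/eqP/setP => i.
by rewrite !inE mxE eqxx.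
Qed.

Lemma mod4_add a b k w : (4 %| a)%N -> (4 %| b)%N -> (2 %| k)%N ->
  (w + 2 * k = a + b)%N -> (4 %| w)%N.
Proof. lia. Qed.

Lemma mod4_shift a k w : ~~ (4 %| a)%N -> (2 %| a)%N -> (2 %| k)%N ->
  (w + 2 * k = a + 46)%N -> (4 %| w)%N.
Proof. move=> /negP h; lia. Qed.

Lemma wt_even n (C : bin_code n) x : self_orthogonal C -> x \in C -> (2 %| wt x)%N.
Proof.
move=> so xC; have := ov_even so xC xC.
suff -> : ov x x = wt x by [].
by rewrite /ov /wt; apply: eq_card => i; rewrite !inE andbb.
Qed.

Theorem proposition6p9 :
  ~ exists C : bin_code 94, is_nkd_code 7 46 C /\ self_orthogonal C.
Proof.
move=> [C [[dimC [[c cC /andP[c0 /eqP wc]] mind]] so]].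
have cardC : #|C| = 128%N by rewrite card_vspace dimC card_Fp.
set D := [set x | (x \in C) && (4 %| wt x)%N].
have Dadd : forall x y, x \in D -> y \in D -> x + y \in D.
  move=> x y; rewrite !inE => /andP[xC dx] /andP[yC dy]; rewrite memvD //=.
  exact: (mod4_add dx dy (ov_even so xC yC) (wtD x y)).
have D0 : 0%R \in D by rewrite inE mem0v wt0.
have cover : (#|C| <= 2 * #|D|)%N.
  have sub : [set x | x \in C] \subset D :|: [set y - c | y in D].
    apply/subsetP => x; rewrite inE => xC.
    case h: (4 %| wt x)%N; first by rewrite inE /D inE xC h.
    apply/setUP; right; apply/imsetP; exists (x + c); last by rewrite addrK.
    rewrite inE memvD //=; have := wtD x c; rewrite wc.
    exact: (mod4_shift (negbT h) (wt_even so xC) (ov_even so xC cC)).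
  have -> : #|C| = #|[set x | x \in C]| by rewrite cardsE.
  apply: (leq_trans (subset_leq_card sub)).
  rewrite cardsU (card_imset _ (addIr (- c))); lia.
have col : forall i, (2 * #|[set x in D | x 0%R i != 0%R]| <= #|D|)%N.
  move=> i; set S := [set x in D | _].
  case: (set_0Vmem S) => [-> | [y yS]]; first by rewrite cards0.
  have SD : S \subset D by apply/subsetP => z; rewrite inE => /andP[].
  have : (#|S| <= #|D :\: S|)%N.
    rewrite -(card_imset _ (addIr y)); apply: subset_leq_card.
    apply/subsetP => z /imsetP[x xS ->].
    have xD := subsetP SD x xS; have yD := subsetP SD y yS.
    have xi : x 0%R i != 0 by move: xS; rewrite inE => /andP[].
    have yi : y 0%R i != 0 by move: yS; rewrite inE => /andP[].
    rewrite in_setD (Dadd _ _ xD yD) andbT inE negb_and; apply/orP; right.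
    rewrite mxE negbK.
    by case: (F2cases (x 0%R i)) xi => -> //; case: (F2cases (y 0%R i)) yi => -> .
  rewrite cardsD (setIidPr SD); lia.
have dbl : (\sum_(x in D) wt x = \sum_(i < 94) #|[set x in D | x 0%R i != 0%R]|)%N.
  rewrite /wt; under eq_bigr do rewrite card_setE.
  rewrite exchange_big /=; apply: eq_bigr => i _; by rewrite sum_in_card.
have up : (2 * \sum_(x in D) wt x <= 94 * #|D|)%N.
  rewrite dbl big_distrr /=.
  apply: (@leq_trans (\sum_(i < 94) #|D|)); first by apply: leq_sum => i _; exact: col.
  by rewrite sum_nat_const card_ord.
have low : (\sum_(x in D) 48 <= 48 + \sum_(x in D) wt x)%N.
  rewrite (bigD1 0%R) //= [in X in (_ <= _ + X)%N](bigD1 0%R) //= wt0 add0n leq_add2l.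
  apply: leq_sum => x /andP[xD x0]; move: xD; rewrite inE => /andP[xC dx].
  have := mind x xC x0; lia.
rewrite sum_nat_const in low.
lia.
Qed.
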